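(* Let $n\ge 1$, $c\ge 2$, $d\ge 2$ be integers, and let $f:\mathbb{Z}_c^n\to\mathbb{Z}_d$ be a function that is not an $n$-partite linear function. Let $\pi$ be a probability distribution on $\mathbb{Z}_c^n$ with $\pi(\mathbf{s})>0$ for every $\mathbf{s}$, and put $$\bar p^{\mathcal{L}}_{f}=\max_{g}\sum_{\mathbf{s}}\pi(\mathbf{s})\,\delta^{f(\mathbf{s})}_{g(\mathbf{s})},$$ the maximum being over all $n$-partite linear functions $g:\mathbb{Z}_c^n\to\mathbb{Z}_d$. Consider the inequality $$\sum_{\mathbf{s}}\pi(\mathbf{s})\sum_{k=1}^{d-1}\Big(\delta^{k}_{f(\mathbf{s})}-\delta^{0}_{f(\mathbf{s})}\Big)p(k|\mathbf{s})\;\le\;\bar p^{\mathcal{L}}_{f}-\sum_{\mathbf{s}}\pi(\mathbf{s})\,\delta^{0}_{f(\mathbf{s})}. \qquad (\ast)$$ Then $(\ast)$ is a non-trivial Bell inequality: it is satisfied by every LHV correlator, and its right-hand side is strictly smaller than the maximum of its left-hand side over all correlators in $\mathcal{P}$.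
   Context: Bell scenario $(n,c,d)$: $n$ space-like separated parties; party $j$ receives an input $s_j\in\mathbb{Z}_c$ and produces an output $m_j\in\mathbb{Z}_d$; $\mathbf{s}=(s_1,\dots,s_n)$, $\mathbf{m}=(m_1,\dots,m_n)$. A conditional distribution $p(\mathbf{m}|\mathbf{s})$ is LHV (local hidden variable) if $p(\mathbf{m}|\mathbf{s})=\int p(\lambda)d\lambda\prod_{j=1}^n p(m_j|s_j,\lambda)$ for some probability measure on a hidden variable space and local conditional distributions. Its correlator is $p(k|\mathbf{s})=\sum_{\mathbf{m}}\delta^{[\sum_j m_j]_d}_{k}\,p(\mathbf{m}|\mathbf{s})$ for $k\in\mathbb{Z}_d$, where $[\cdot]_d$ denotes reduction mod $d$; LHV correlators are correlators of LHV distributions. $\mathcal{P}$ is the set of all correlator families, i.e. the convex hull of the deterministic correlators $p(k|\mathbf{s})=\delta^k_{F(\mathbf{s})}$ over all functions $F:\mathbb{Z}_c^n\to\mathbb{Z}_d$ (equivalently, all families with $p(\cdot|\mathbf{s})$ a probability distribution on $\mathbb{Z}_d$ for each $\mathbf{s}$). A function $g:\mathbb{Z}_c^n\to\mathbb{Z}_d$ is $n$-partite linear if $g(\mathbf{s})=[\sum_{j=1}^n g_j(s_j)]_d$ for some single-site maps $g_j:\mathbb{Z}_c\to\mathbb{Z}_d$. $\delta$ denotes the Kronecker delta. *)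

(* Defs.v *)
From HB Require Import structures.
From mathcomp Require Import all_boot all_order all_algebra.
From mathcomp Require Import all_classical all_reals all_analysis.
Set Implicit Arguments. Unset Strict Implicit. Unset Printing Implicit Defensive.
Import Order.TTheory GRing.Theory Num.Theory.
Local Open Scope ring_scope.

(* Bell scenario (n,c,d): settings s : Z_c^n are {ffun 'I_n -> 'I_c},
   outcomes m : Z_d^n are {ffun 'I_n -> 'I_d}; Z_k is 'I_k with values in nat
   and arithmetic taken mod k. *)
Definition setting (n c : nat) := {ffun 'I_n -> 'I_c}.
Definition outcome (n d : nat) := {ffun 'I_n -> 'I_d}.

Definition nlinear (n c d : nat) (g : setting n c -> 'I_d) : bool :=
  [exists G : {ffun 'I_n -> {ffun 'I_c -> 'I_d}},
     [forall s : setting n c, nat_of_ord (g s) == ((\sum_(j < n) nat_of_ord (G j (s j))) %% d)%N]].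

Definition correlator (R : pzRingType) (n c d : nat)
  (p : setting n c -> outcome n d -> R) (s : setting n c) (k : 'I_d) : R :=
  \sum_(m : outcome n d | ((\sum_(j < n) nat_of_ord (m j)) %% d == k)%N) p s m.

Definition LHV_dist (R : realType) (n c d : nat)
  (p : setting n c -> outcome n d -> R) : Prop :=
  exists (disp : measure_display) (L : measurableType disp)
         (P : probability L R) (q : 'I_n -> 'I_c -> L -> 'I_d -> R),
    [/\ (forall j a l b, 0 <= q j a l b),
        (forall j a l, \sum_(b < d) q j a l b = 1),
        (forall j a b, measurable_fun setT (fun l => q j a l b)) &
        (forall s m, ((p s m)%:E = \int[P]_l (\prod_(j < n) q j (s j) l (m j))%:E)%E)].

Definition LHV_correlator (R : realType) (n c d : nat)
  (pc : setting n c -> 'I_d -> R) : Prop :=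
  exists p : setting n c -> outcome n d -> R,
    LHV_dist p /\ forall s k, pc s k = correlator p s k.

Definition in_P (R : realType) (n c d : nat) (pc : setting n c -> 'I_d -> R) : Prop :=
  forall s, (forall k, 0 <= pc s k) /\ \sum_(k < d) pc s k = 1.

Definition kdelta (R : pzRingType) (d : nat) (a b : 'I_d) : R := (a == b)%:R.

Definition success (R : realType) (n c d : nat) (pi : setting n c -> R)
  (f g : setting n c -> 'I_d) : R :=
  \sum_(s : setting n c) pi s * kdelta R (f s) (g s).

Definition pbarL (R : realType) (n c d : nat) (pi : setting n c -> R)
  (f : setting n c -> 'I_d) : R :=
  \big[Num.max/0]_(g : {ffun setting n c -> 'I_d} | nlinear g) success pi f g.

Definition bell_lhs (R : realType) (n c d : nat) (pi : setting n c -> R)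
  (f : setting n c -> 'I_d) (pc : setting n c -> 'I_d -> R) : R :=
  \sum_(s : setting n c) pi s *
    \sum_(k < d | nat_of_ord k != 0%N)
       ((k == f s)%:R - (nat_of_ord (f s) == 0%N)%:R) * pc s k.

Definition bell_rhs (R : realType) (n c d : nat) (pi : setting n c -> R)
  (f : setting n c -> 'I_d) : R :=
  pbarL pi f - \sum_(s : setting n c) pi s * (nat_of_ord (f s) == 0%N)%:R.

(* Main.v *)
Require Import Defs.
From HB Require Import structures.
From mathcomp Require Import all_boot all_order all_algebra.
From mathcomp Require Import all_classical all_reals all_analysis.
From mathcomp Require Import measurable_realfun.
Import Order.TTheory GRing.Theory Num.Theory.
Local Open Scope ring_scope.
Set Implicit Arguments. Unset Strict Implicit.
Lemma inner_alg (R : realType) d (x : 'I_d -> R) (a : 'I_d) : \sum_k x k = 1 ->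
  \sum_(k < d | nat_of_ord k != 0%N) ((k == a)%:R - (nat_of_ord a == 0%N)%:R) * x k
  = x a - (nat_of_ord a == 0%N)%:R.
Proof.
move=> hx.
under eq_bigr do rewrite mulrBl.
rewrite sumrB -mulr_sumr.
case: (eqVneq (nat_of_ord a) 0%N) => ha.
- rewrite big1; last first.
    move=> k hk; suff -> : (k == a) = false by rewrite mul0r.
    by apply/negbTE; apply: contra hk => /eqP ->; rewrite ha.
  rewrite (bigD1 a) //= in hx.
  have -> : \sum_(k < d | nat_of_ord k != 0%N) x k = 1 - x a.
    rewrite -hx addrC addrK; apply: eq_bigl => k.
    by rewrite -val_eqE /= ha.
  by rewrite mul1r sub0r opprB.
- rewrite (bigD1 a) //= eqxx mul1r big1 ?addr0 ?mul0r //.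
  by move=> k /andP [_ /negbTE ->]; rewrite mul0r.
Qed.
Lemma int_comb (R : realType) (dd : measure_display) (L : measurableType dd)
  (P : probability L R) (I : finType) (c p : I -> R) (phi : I -> L -> R) :
  (forall i, 0 <= c i) -> (forall i l, 0 <= phi i l) ->
  (forall i, measurable_fun setT (phi i)) ->
  (forall i, (p i)%:E = (\int[P]_l (phi i l)%:E)%E) ->
  ((\sum_i c i * p i)%:E = \int[P]_l (\sum_i c i * phi i l)%:E)%E.
Proof.
move=> c0 phi0 mphi hp.
rewrite -sumEFin.
under eq_integral do rewrite -sumEFin.
rewrite ge0_integral_sum //; last first.
- by move=> i l _; rewrite lee_fin mulr_ge0.
- by move=> i; apply/measurable_EFinP; apply: measurable_funM => //; exact: measurable_cst.
apply: eq_bigr => i _.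
under eq_integral do rewrite EFinM.
rewrite ge0_integralZl_EFin // -?hp ?EFinM //.
- by move=> l _; rewrite lee_fin.
- exact/measurable_EFinP.
Qed.

Lemma int_le (R : realType) (dd : measure_display) (L : measurableType dd)
  (P : probability L R) (I : finType) (c p : I -> R) (phi : I -> L -> R) (K : R) :
  (forall i, 0 <= c i) -> (forall i l, 0 <= phi i l) ->
  (forall i, measurable_fun setT (phi i)) ->
  (forall i, (p i)%:E = (\int[P]_l (phi i l)%:E)%E) ->
  (forall l, \sum_i c i * phi i l <= K) ->
  \sum_i c i * p i <= K.
Proof.
move=> c0 phi0 mphi hp hK.
rewrite -lee_fin (@int_comb _ _ _ P _ _ _ _ c0 phi0 mphi hp).
have mF : measurable_fun setT (fun l => (\sum_i c i * phi i l)%:E).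
  apply/measurable_EFinP; apply: measurable_sum => i.
  by apply: measurable_funM => //; exact: measurable_cst.
have h1 : (\int[P]_l (\sum_i c i * phi i l)%:E <= \int[P]_l (cst K%:E) l)%E.
  apply: ge0_le_integral.
  - by [].
  - by move=> l _; rewrite lee_fin sumr_ge0 // => i _; rewrite mulr_ge0.
  - exact: mF.
  - exact: measurable_cst.
  - by move=> l _; rewrite lee_fin.
apply: (le_trans h1).
rewrite integral_cst //.
set m := (X in (_ * X <= _)%E).
have -> : m = 1%E by exact: probability_setT.
by rewrite mule1.
Qed.

Lemma int_eq (R : realType) (dd : measure_display) (L : measurableType dd)
  (P : probability L R) (I : finType) (c p : I -> R) (phi : I -> L -> R) (K : R) :
  (forall i, 0 <= c i) -> (forall i l, 0 <= phi i l) ->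
  (forall i, measurable_fun setT (phi i)) ->
  (forall i, (p i)%:E = (\int[P]_l (phi i l)%:E)%E) ->
  (forall l, \sum_i c i * phi i l = K) ->
  \sum_i c i * p i = K.
Proof.
move=> c0 phi0 mphi hp hK.
apply/eqP; rewrite -eqe (@int_comb _ _ _ P _ _ _ _ c0 phi0 mphi hp).
under eq_integral do rewrite hK.
rewrite (integral_cst _ _ K%:E) //.
set m := (X in (_ * X)%E).
have -> : m = 1%E by exact: probability_setT.
by rewrite mule1.
Qed.

Lemma sum_delta (R : realType) d (x : 'I_d -> R) (a : 'I_d) :
  \sum_k (k == a)%:R * x k = x a.
Proof.
rewrite (bigD1 a) //= eqxx mul1r big1 ?addr0 // => k /negbTE ->; by rewrite mul0r.
Qed.

Lemma prod_pair (R : realType) (I J : finType) (G : I * J -> R) :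
  \prod_p G p = \prod_i \prod_j G (i, j).
Proof. by rewrite pair_bigA; apply: eq_bigr => -[]. Qed.

Lemma sum_pair (R : realType) (I J : finType) (G : I * J -> R) :
  \sum_p G p = \sum_i \sum_j G (i, j).
Proof. by rewrite pair_bigA; apply: eq_bigr => -[]. Qed.

Definition mh (n c d : nat) (s : setting n c) (h : {ffun 'I_n * 'I_c -> 'I_d}) :
  outcome n d := [ffun j => h (j, s j)].

Definition Wt (R : realType) (n c d : nat) (Q : 'I_n -> 'I_c -> 'I_d -> R)
  (h : {ffun 'I_n * 'I_c -> 'I_d}) : R :=
  \prod_(p : 'I_n * 'I_c) Q p.1 p.2 (h p).

Lemma expand (R : realType) (n c d : nat) (Q : 'I_n -> 'I_c -> 'I_d -> R)
  (hQ1 : forall j a, \sum_b Q j a b = 1) (s : setting n c) (m : outcome n d) :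
  \prod_j Q j (s j) (m j) = \sum_h (m == mh s h)%:R * Wt Q h.
Proof.
rewrite /Wt.
transitivity (\prod_(p : 'I_n * 'I_c) \sum_(b : 'I_d)
   ((if p.2 == s p.1 then (b == m p.1)%:R else 1) * Q p.1 p.2 b)).
  rewrite prod_pair; apply: eq_bigr => j _ /=.
  rewrite (bigD1 (s j)) //= eqxx sum_delta big1 ?mulr1 // => a /negbTE ->.
  by under eq_bigr do rewrite mul1r; exact: hQ1.
rewrite bigA_distr_bigA; apply: eq_bigr => h _.
rewrite big_split /=; congr (_ * _).
rewrite prod_pair /=.
rewrite (eq_bigr (fun j => (h (j, s j) == m j)%:R)); last first.
  move=> j _; rewrite (bigD1 (s j)) //= eqxx big1 ?mulr1 // => a /negbTE ->.
  by [].
case: (eqVneq m (mh s h)) => [->|hne].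
  by rewrite big1 // => j _; rewrite /mh ffunE eqxx.
case/boolP: [forall j, h (j, s j) == m j] => [/forallP H|/forallPn [j hj]].
  by case/eqP: hne; apply/ffunP => j; rewrite /mh ffunE (eqP (H j)).
by rewrite (bigD1 j) //= (negbTE hj) mul0r.
Qed.

Definition gh (n c d : nat) (d0 : (0 < d)%N) (h : {ffun 'I_n * 'I_c -> 'I_d}) :
  {ffun setting n c -> 'I_d} :=
  [ffun s : setting n c => Ordinal (ltn_pmod (\sum_(j < n) nat_of_ord (h (j, s j))) d0)].

Lemma gh_lin (n c d : nat) (d0 : (0 < d)%N) (h : {ffun 'I_n * 'I_c -> 'I_d}) : nlinear (gh d0 h).
Proof.
apply/existsP; exists [ffun j => [ffun a => h (j, a)]]; apply/forallP => s.
rewrite ffunE /=; apply/eqP; congr (_ %% _)%N; apply: eq_bigr => j _.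
by rewrite !ffunE.
Qed.

Lemma le_pbarL (R : realType) (n c d : nat) (pi : setting n c -> R)
  (f : setting n c -> 'I_d) (g : {ffun setting n c -> 'I_d}) :
  nlinear g -> success pi f g <= pbarL pi f.
Proof. by move=> hg; exact: le_bigmax_cond. Qed.

Lemma pointwise (R : realType) (n c d : nat) (d0 : (0 < d)%N)
  (Q : 'I_n -> 'I_c -> 'I_d -> R)
  (hQ0 : forall j a b, 0 <= Q j a b) (hQ1 : forall j a, \sum_b Q j a b = 1)
  (pi : setting n c -> R) (hpi0 : forall s, 0 <= pi s)
  (f : setting n c -> 'I_d) :
  \sum_(sm : setting n c * outcome n d)
     (pi sm.1 * ((\sum_(j < n) nat_of_ord (sm.2 j)) %% d == f sm.1)%N%:R)
       * \prod_j Q j (sm.1 j) (sm.2 j) <= pbarL pi f.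
Proof.
under eq_bigr do rewrite (expand hQ1) mulr_sumr.
rewrite exchange_big /=.
have key : forall h, \sum_(sm : setting n c * outcome n d)
     (pi sm.1 * ((\sum_(j < n) nat_of_ord (sm.2 j)) %% d == f sm.1)%N%:R)
       * ((sm.2 == mh sm.1 h)%:R * Wt Q h) = Wt Q h * success pi f (gh d0 h).
  move=> h; rewrite sum_pair /success mulr_sumr; apply: eq_bigr => s _ /=.
  rewrite (bigD1 (mh s h)) //= eqxx [X in _ + X]big1 ?addr0; last first.
    by move=> m /negbTE ->; rewrite mul0r mulr0.
  rewrite mul1r /kdelta ffunE -val_eqE /= eq_sym.
  rewrite /mh; under eq_bigr do rewrite ffunE.
  by rewrite mulrC.
rewrite (eq_bigr _ (fun h _ => key h)).
apply: (@le_trans _ _ (\sum_(h : {ffun 'I_n * 'I_c -> 'I_d}) Wt Q h * pbarL pi f)).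
  apply: ler_sum => h _; apply: ler_wpM2l.
    by apply: prodr_ge0 => p _.
  exact/le_pbarL/gh_lin.
rewrite -mulr_suml /Wt -(bigA_distr_bigA (fun (p : 'I_n * 'I_c) (b : 'I_d) => Q p.1 p.2 b)) big1 ?mul1r // => p _.
Qed.

Lemma lhs_eq (R : realType) (n c d : nat) (pi : setting n c -> R)
  (f : setting n c -> 'I_d) (pc : setting n c -> 'I_d -> R) :
  (forall s, \sum_k pc s k = 1) ->
  bell_lhs pi f pc = \sum_s pi s * pc s (f s)
     - \sum_s pi s * (nat_of_ord (f s) == 0%N)%:R.
Proof.
move=> hs; rewrite /bell_lhs -sumrB; apply: eq_bigr => s _.
by rewrite inner_alg // mulrBr.
Qed.

Unset Implicit Arguments.

Theorem proposition3p3p1 (R : realType) (n c d : nat)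
  (hn : (1 <= n)%N) (hc : (2 <= c)%N) (hd : (2 <= d)%N)
  (f : {ffun setting n c -> 'I_d}) (hf : ~~ nlinear f)
  (pi : setting n c -> R) (hpi_pos : forall s, 0 < pi s)
  (hpi_sum : \sum_(s : setting n c) pi s = 1) :
  (forall pc : setting n c -> 'I_d -> R,
      LHV_correlator pc -> bell_lhs pi f pc <= bell_rhs pi f)
  /\ (exists pc : setting n c -> 'I_d -> R,
      in_P pc /\ bell_rhs pi f < bell_lhs pi f pc).
Proof.
have d0 : (0 < d)%N := ltnW hd.
split.
  move=> pc [pp [[disp [L [P [q [q0 q1 qm qi]]]]] hpc]].
  have hsum : forall s, \sum_k pc s k = 1.
    move=> s; under eq_bigr do rewrite hpc.
    rewrite /correlator.
    transitivity (\sum_(m : outcome n d) pp s m).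
      under eq_bigr do rewrite big_mkcond.
      rewrite exchange_big; apply: eq_bigr => m _ /=.
      rewrite (bigD1 (Ordinal (ltn_pmod (\sum_(j < n) nat_of_ord (m j)) d0))) //= eqxx.
      rewrite big1 ?addr0 // => k hk; rewrite ifF //; apply/negbTE.
      by apply: contra hk => /eqP hk; apply/eqP/val_inj => /=.
    under eq_bigr do rewrite -[pp s _]mul1r.
    apply: (@int_eq R disp L P _ (fun _ => 1) (pp s)
              (fun m l => \prod_j q j (s j) l (m j)) 1).
    - by move=> _; exact: ler01.
    - by move=> m l; apply: prodr_ge0 => j _.
    - by move=> m; apply: measurable_prod => j _; exact: qm.
    - by move=> m; exact: qi.
    - move=> l; under eq_bigr do rewrite mul1r.
      rewrite /outcome -(bigA_distr_bigA (fun j b => q j (s j) l b)).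
      by rewrite big1 // => j _; exact: q1.
  rewrite lhs_eq // /bell_rhs lerD2r.
  rewrite (_ : \sum_s pi s * pc s (f s) =
     \sum_(sm : setting n c * outcome n d)
     (pi sm.1 * ((\sum_(j < n) nat_of_ord (sm.2 j)) %% d == f sm.1)%N%:R)
       * pp sm.1 sm.2); last first.
    rewrite sum_pair; apply: eq_bigr => s _ /=.
    rewrite hpc /correlator mulr_sumr big_mkcond; apply: eq_bigr => m _ /=.
    by case: ifP => _; rewrite ?mulr1 ?mulr0 ?mul0r.
  apply: (@int_le R disp L P (setting n c * outcome n d)%type
     (fun sm => pi sm.1 * ((\sum_(j < n) nat_of_ord (sm.2 j)) %% d == f sm.1)%N%:R)
     (fun sm => pp sm.1 sm.2)
     (fun sm l => \prod_j q j (sm.1 j) l (sm.2 j)) (pbarL pi f)).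
  - by move=> sm; rewrite mulr_ge0 // ltW.
  - by move=> sm l; apply: prodr_ge0 => j _.
  - by move=> sm; apply: measurable_prod => j _; exact: qm.
  - by move=> sm; exact: qi.
  - move=> l; apply: (@pointwise R n c d d0 (fun j a b => q j a l b)) => //.
    by move=> s; exact: ltW.
exists (fun s k => (k == f s)%:R).
have hs1 : forall s, \sum_(k < d) ((k == f s)%:R : R) = 1.
  by move=> s; rewrite (bigD1 (f s)) //= eqxx big1 ?addr0 // => k /negbTE ->.
split.
  by move=> s; split => //; move=> k; exact: ler0n.
rewrite lhs_eq // /bell_rhs ltrD2r.
under [X in _ < X]eq_bigr do rewrite eqxx mulr1.
rewrite hpi_sum /pbarL.
apply: (big_ind (fun x => x < 1)) => //.
- by move=> x y hx hy; rewrite gt_max hx hy.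
move=> g hg.
have [s hs] : exists s, f s != g s.
  case/boolP: [exists s, f s != g s] => [/existsP //|/existsPn H].
  have efg : f = g by apply/ffunP => s; apply/eqP; move: (H s); rewrite negbK.
  by move: hf; rewrite efg hg.
rewrite /success -hpi_sum (bigD1 s) //= [X in _ < X](bigD1 s) //=.
rewrite /kdelta (negbTE hs) mulr0 add0r.
apply: ltr_pwDl; first exact: hpi_pos.
apply: ler_sum => i _; case: eqP => _; rewrite ?mulr1 ?mulr0 //.
exact: ltW.
Qed.
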